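(* Let $\mathcal{H}$ be a complex separable Hilbert space with orthonormal basis $\{e_n\}_{n=1}^\infty$, and let $W \in \mathcal{B}(\mathcal{H})$ be the unilateral forward weighted shift $W e_n = w_n e_{n+1}$ with bounded weight sequence $(w_n)_n$ satisfying $\inf_n |w_n| > 0$. Then $W$ does not lie in the norm closure of $\mathfrak{c}(\mathrm{nil}_2) := \{MN - NM : M, N \in \mathcal{B}(\mathcal{H}),\ M^2 = 0 = N^2\}$. *)

(* Defs.v *)
(* H is modelled as l^2(N; C) with standard
   orthonormal basis e_n = indicator of n (0-indexed). *)
From Stdlib Require Import Reals.
From Coquelicot Require Import Coquelicot.
Open Scope R_scope.

Definition l2 (x : nat -> C) : Prop := ex_series (fun n => (Cmod (x n)) ^ 2).
Definition l2norm (x : nat -> C) : R := sqrt (Series (fun n => (Cmod (x n)) ^ 2)).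

Definition vadd (x y : nat -> C) : nat -> C := fun n => Cplus (x n) (y n).
Definition vsub (x y : nat -> C) : nat -> C := fun n => Cminus (x n) (y n).
Definition vscale (a : C) (x : nat -> C) : nat -> C := fun n => Cmult a (x n).
Definition vzero : nat -> C := fun _ => RtoC 0.

(* An element of B(H): a map defined on all sequences whose restriction to l^2
   is a bounded (complex-)linear operator l^2 -> l^2.  Values off l^2 are
   irrelevant junk. *)
Definition bounded_op (T : (nat -> C) -> (nat -> C)) : Prop :=
  (forall x, l2 x -> l2 (T x)) /\
  (forall (a : C) x y, l2 x -> l2 y ->
     T (vadd (vscale a x) y) = vadd (vscale a (T x)) (T y)) /\
  (exists K : R, forall x, l2 x -> l2norm (T x) <= K * l2norm x).

Definition square_zero (T : (nat -> C) -> (nat -> C)) : Prop :=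
  forall x, l2 x -> T (T x) = vzero.

Definition commutator (M N : (nat -> C) -> (nat -> C)) : (nat -> C) -> (nat -> C) :=
  fun x => vsub (M (N x)) (N (M x)).

Definition in_closure_c_nil2 (A : (nat -> C) -> (nat -> C)) : Prop :=
  forall eps : R, 0 < eps ->
    exists M N : (nat -> C) -> (nat -> C),
      bounded_op M /\ bounded_op N /\ square_zero M /\ square_zero N /\
      (forall x, l2 x -> l2norm (vsub (A x) (commutator M N x)) <= eps * l2norm x).

(* unilateral forward weighted shift W e_n = w_n e_{n+1} (0-indexed) *)
Definition wshift (w : nat -> C) (x : nat -> C) : nat -> C :=
  fun n => match n with O => RtoC 0 | S k => Cmult (w k) (x k) end.

(* Main.v *)
Require Import Defs.
From Stdlib Require Import Reals Lra Lia Psatz Classical FunctionalExtensionality.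
From Coquelicot Require Import Coquelicot.
Open Scope R_scope.


Definition sqf (x : nat -> C) : nat -> R := fun n => (Cmod (x n)) ^ 2.
Definition ps (x : nat -> C) (N : nat) : R := sum_f_R0 (sqf x) N.

Lemma sqf_ge0 x n : 0 <= sqf x n.
Proof. unfold sqf. apply pow2_ge_0. Qed.

Lemma ps_ge0 x N : 0 <= ps x N.
Proof. unfold ps. induction N; simpl. apply sqf_ge0. pose proof (sqf_ge0 x (S N)). lra. Qed.

Lemma ps_S x N : ps x (S N) = ps x N + sqf x (S N).
Proof. reflexivity. Qed.

Lemma l2_ps_series x N : l2 x -> ps x N <= Series (sqf x).
Proof.
  intros H. unfold l2 in H.
  pose proof (Series_correct _ H) as Hs. apply is_series_Reals in Hs.
  apply sum_incr; [exact Hs| apply sqf_ge0].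
Qed.

Lemma series_ge0 x : l2 x -> 0 <= Series (sqf x).
Proof. intros H. pose proof (l2_ps_series x 0 H). pose proof (ps_ge0 x 0). lra. Qed.

Lemma l2norm_sq x : l2 x -> l2norm x ^ 2 = Series (sqf x).
Proof. intros H. unfold l2norm. apply pow2_sqrt. apply series_ge0; auto. Qed.

Lemma l2norm_ge0 x : 0 <= l2norm x.
Proof. unfold l2norm. apply sqrt_pos. Qed.

Lemma l2_ps x N : l2 x -> ps x N <= l2norm x ^ 2.
Proof. intros H. rewrite l2norm_sq; auto. apply l2_ps_series; auto. Qed.

Lemma l2_sqrt_ps x N : l2 x -> sqrt (ps x N) <= l2norm x.
Proof.
  intros H. rewrite <- (sqrt_pow2 (l2norm x)) by apply l2norm_ge0.
  apply sqrt_le_1_alt. apply l2_ps; auto.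
Qed.

Lemma ps_bound_series x B : (forall N, ps x N <= B) -> l2 x /\ Series (sqf x) <= B.
Proof.
  intros H.
  assert (Hg : Un_growing (fun N => ps x N)).
  { intro n. rewrite ps_S. pose proof (sqf_ge0 x (S n)). lra. }
  assert (Hb : has_ub (fun N => ps x N)).
  { exists B. intros r [N ->]. apply H. }
  destruct (growing_cv _ Hg Hb) as [l Hl].
  assert (Hs : is_series (sqf x) l).
  { apply is_series_Reals. exact Hl. }
  assert (Hex : l2 x) by (exists l; exact Hs).
  split; auto.
  rewrite (is_series_unique _ _ Hs).
  refine (Rle_cv_lim H Hl _).
  intros eps Heps. exists O. intros n _. unfold Rdist. rewrite Rminus_eq_0, Rabs_R0. lra.
Qed.

Lemma ps_bound_l2 x r : 0 <= r -> (forall N, ps x N <= r ^ 2) -> l2 x /\ l2norm x <= r.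
Proof.
  intros Hr H. destruct (ps_bound_series x _ H) as [H1 H2]. split; auto.
  unfold l2norm. rewrite <- (sqrt_pow2 r) by auto. apply sqrt_le_1_alt. auto.
Qed.

Lemma sqrt_ps_bound_l2 x r : (forall N, sqrt (ps x N) <= r) -> l2 x /\ l2norm x <= r.
Proof.
  intros H. assert (Hr : 0 <= r). { eapply Rle_trans; [apply sqrt_pos| apply (H O)]. }
  apply ps_bound_l2; auto. intros N. rewrite <- (pow2_sqrt (ps x N)) by apply ps_ge0.
  pose proof (H N). pose proof (sqrt_pos (ps x N)). nra.
Qed.

Lemma aux2d X Y Z a b c : 0 <= X -> 0 <= Y -> 0 <= Z -> 0 <= a -> 0 <= b -> 0 <= c ->
  Z <= X + Y -> c <= a + b ->
  sqrt (Z ^ 2 + c ^ 2) <= sqrt (X ^ 2 + a ^ 2) + sqrt (Y ^ 2 + b ^ 2).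
Proof.
  intros.
  set (s := sqrt (X ^ 2 + a ^ 2)). set (t := sqrt (Y ^ 2 + b ^ 2)).
  assert (Hs : s ^ 2 = X ^ 2 + a ^ 2) by (apply pow2_sqrt; nra).
  assert (Ht : t ^ 2 = Y ^ 2 + b ^ 2) by (apply pow2_sqrt; nra).
  assert (s0 : 0 <= s) by apply sqrt_pos. assert (t0 : 0 <= t) by apply sqrt_pos.
  assert (Hst : X * Y + a * b <= s * t).
  { assert (E: (s*t)*(s*t) - (X*Y+a*b)*(X*Y+a*b) = (X*b - a*Y)^2).
    { replace ((s*t)*(s*t)) with (s^2*t^2) by ring. rewrite Hs, Ht; ring. }
    assert (0 <= s*t) by nra.
    destruct (Rle_dec (X*Y+a*b) (s*t)); auto.
    assert (0 <= (X*b - a*Y)^2) by apply pow2_ge_0. nra. }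
  rewrite <- (sqrt_pow2 (s + t)) by lra. apply sqrt_le_1_alt. nra.
Qed.

Lemma mink x y z : (forall n, Cmod (z n) <= Cmod (x n) + Cmod (y n)) ->
  forall N, sqrt (ps z N) <= sqrt (ps x N) + sqrt (ps y N).
Proof.
  intros H N. induction N.
  - unfold ps; simpl sum_f_R0; unfold sqf. rewrite !sqrt_pow2 by apply Cmod_ge_0. apply H.
  - rewrite !ps_S. unfold sqf.
    rewrite <- (pow2_sqrt (ps z N)) by apply ps_ge0.
    rewrite <- (pow2_sqrt (ps x N)) by apply ps_ge0.
    rewrite <- (pow2_sqrt (ps y N)) by apply ps_ge0.
    apply aux2d; auto using sqrt_pos, Cmod_ge_0.
Qed.

Lemma l2_tri x y z : l2 x -> l2 y -> (forall n, Cmod (z n) <= Cmod (x n) + Cmod (y n)) ->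
  l2 z /\ l2norm z <= l2norm x + l2norm y.
Proof.
  intros Hx Hy H. apply sqrt_ps_bound_l2. intros N.
  eapply Rle_trans. apply (mink x y z H N).
  pose proof (l2_sqrt_ps x N Hx). pose proof (l2_sqrt_ps y N Hy). lra.
Qed.

Lemma l2_scal x z k : l2 x -> 0 <= k -> (forall n, Cmod (z n) <= k * Cmod (x n)) ->
  l2 z /\ l2norm z <= k * l2norm x.
Proof.
  intros Hx Hk H. apply ps_bound_l2. pose proof (l2norm_ge0 x). nra.
  intros N. assert (ps z N <= k ^ 2 * ps x N).
  { induction N.
    - unfold ps; simpl sum_f_R0; unfold sqf. pose proof (H O). pose proof (Cmod_ge_0 (z O)). nra.
    - rewrite !ps_S. unfold sqf. pose proof (H (S N)). pose proof (Cmod_ge_0 (z (S N))). nra. }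
  pose proof (l2_ps x N Hx). pose proof (pow2_ge_0 k).
  replace ((k * l2norm x) ^ 2) with (k^2 * l2norm x ^ 2) by ring. nra.
Qed.

Lemma l2_ext x z : l2 x -> (forall n, Cmod (z n) = Cmod (x n)) -> l2 z /\ l2norm z = l2norm x.
Proof.
  intros Hx H. assert (E : sqf z = sqf x).
  { apply functional_extensionality; intro n; unfold sqf; rewrite H; auto. }
  unfold l2, l2norm. fold (sqf z). fold (sqf x). rewrite E. auto.
Qed.

Lemma coord_le x k : l2 x -> Cmod (x k) <= l2norm x.
Proof.
  intros Hx. assert (sqf x k <= ps x k).
  { destruct k. unfold ps; simpl sum_f_R0; lra. rewrite ps_S. pose proof (ps_ge0 x k). lra. }
  pose proof (l2_ps x k Hx). unfold sqf in H. pose proof (l2norm_ge0 x).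
  pose proof (Cmod_ge_0 (x k)). nra.
Qed.

Lemma norm0_zero x : l2 x -> l2norm x <= 0 -> x = vzero.
Proof.
  intros Hx H. apply functional_extensionality; intro k. apply Cmod_eq_0.
  pose proof (coord_le x k Hx). pose proof (Cmod_ge_0 (x k)). unfold vzero. lra.
Qed.

Ltac veq := apply functional_extensionality; intro; unfold vadd, vsub, vscale, vzero; ring.

Definition e0 : nat -> C := fun n => match n with O => RtoC 1 | S _ => RtoC 0 end.

Lemma Cmod_sub_le a b : Cmod (Cminus a b) <= Cmod a + Cmod b.
Proof. unfold Cminus. rewrite <- (Cmod_opp b). apply Cmod_triangle. Qed.


Lemma l2_e0 : l2 e0.
Proof.
  apply (ps_bound_l2 e0 1). lra. intros N. replace (1^2) with 1 by ring.
  induction N; unfold ps in *; simpl sum_f_R0; unfold sqf, e0 in *.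
  rewrite Cmod_1; simpl; lra. rewrite Cmod_0. replace (0^2) with 0 by ring. lra.
Qed.

Lemma l2_vzero : l2 vzero /\ l2norm vzero <= 0.
Proof.
  assert (H : l2 vzero /\ l2norm vzero <= 0 * l2norm e0).
  { apply (l2_scal e0). apply l2_e0. lra. intros n. unfold vzero. rewrite Cmod_0. lra. }
  destruct H; split; auto; lra.
Qed.

Lemma l2_vadd x y : l2 x -> l2 y -> l2 (vadd x y).
Proof. intros. apply (l2_tri x y); auto. intros; apply Cmod_triangle. Qed.

Lemma l2_vsub x y : l2 x -> l2 y -> l2 (vsub x y).
Proof. intros. apply (l2_tri x y); auto. intros; apply Cmod_sub_le. Qed.

Lemma l2_vscale a x : l2 x -> l2 (vscale a x).
Proof. intros. apply (l2_scal x _ (Cmod a)); auto using Cmod_ge_0.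
  intros; unfold vscale; rewrite Cmod_mult; lra. Qed.

Definition pres (F : (nat -> C) -> (nat -> C)) := forall x, l2 x -> l2 (F x).
Definition lin (F : (nat -> C) -> (nat -> C)) := forall a x y, l2 x -> l2 y ->
  F (vadd (vscale a x) y) = vadd (vscale a (F x)) (F y).

Lemma lin_zero F : lin F -> F vzero = vzero.
Proof.
  intros H. pose proof (H (RtoC 1) vzero vzero (proj1 l2_vzero) (proj1 l2_vzero)) as E.
  replace (vadd (vscale (RtoC 1) vzero) vzero) with vzero in E by veq.
  apply functional_extensionality; intro n.
  apply (f_equal (fun f => f n)) in E. unfold vadd, vscale, vzero in *.
  set (a := F (fun _ => RtoC 0) n) in *.
  assert (H2 : a = Cminus (Cplus (Cmult (RtoC 1) a) a) a) by ring.
  rewrite <- E in H2. rewrite H2. ring.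
Qed.

Lemma lin_add F x y : lin F -> l2 x -> l2 y -> F (vadd x y) = vadd (F x) (F y).
Proof.
  intros H Hx Hy. replace (vadd x y) with (vadd (vscale (RtoC 1) x) y) by veq.
  rewrite H; auto. veq.
Qed.

Lemma lin_scale F a x : lin F -> l2 x -> F (vscale a x) = vscale a (F x).
Proof.
  intros H Hx. replace (vscale a x) with (vadd (vscale a x) vzero) by veq.
  rewrite H; auto using (proj1 l2_vzero). rewrite lin_zero; auto. veq.
Qed.

Lemma lin_sub F x y : lin F -> l2 x -> l2 y -> F (vsub x y) = vsub (F x) (F y).
Proof.
  intros H Hx Hy. replace (vsub x y) with (vadd (vscale (RtoC (-1)) y) x) by veq.
  rewrite H; auto. veq.
Qed.

Lemma vsub_zero x y : vsub x y = vzero -> x = y.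
Proof.
  intros E. apply functional_extensionality; intro n.
  apply (f_equal (fun f => f n)) in E. unfold vsub, vzero in E.
  transitivity (Cplus (Cminus (x n) (y n)) (y n)). ring. rewrite E. ring.
Qed.

Lemma algebra (P Q T : (nat -> C) -> (nat -> C)) :
  pres P -> pres Q -> pres T -> lin P -> lin Q -> lin T ->
  (forall x, l2 x -> T x = Q (P x)) ->
  (forall x, l2 x -> P (Q x) = vscale (RtoC (-1)) (T x)) ->
  (forall x, l2 x -> Q (Q x) = vscale (RtoC (-1)) (P (P x))) ->
  (forall x, l2 x -> T x = vzero -> x = vzero) ->
  (forall x, l2 x -> T x <> e0) ->
  (forall y, l2 y -> exists x c, l2 x /\ y = vadd (T x) (vscale c e0)) ->
  False.
Proof.
  intros pP pQ pT lP lQ lT h1 h2 h3 inj e0n surj.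
  assert (He0 := l2_e0).
  assert (Tm : forall x, l2 x -> T x = vscale (RtoC (-1)) (P (Q x))).
  { intros x Hx. rewrite h2; auto. veq. }
  assert (Qinj : forall u v, l2 u -> l2 v -> Q u = Q v -> u = v).
  { intros u v Hu Hv E. apply vsub_zero. apply inj. apply l2_vsub; auto.
    rewrite lin_sub; auto. rewrite (Tm u), (Tm v), E; auto. veq. }
  assert (Case1 : forall a, l2 a -> P a = e0 -> False).
  { intros a Ha Pa.
    assert (Psurj : forall y, l2 y -> exists z, l2 z /\ P z = y).
    { intros y Hy. destruct (surj y Hy) as (x & c & Hx & ->).
      exists (vadd (vscale c a) (vscale (RtoC (-1)) (Q x))). split.
      apply l2_vadd; apply l2_vscale; auto.
      assert (l2 (Q x)) by (apply pQ; auto).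
      rewrite lP, lin_scale, h2, Pa; auto; try apply l2_vscale; auto. veq. }
    destruct (Psurj a Ha) as (z1 & Hz1 & E1).
    destruct (Psurj z1 Hz1) as (z2 & Hz2 & E2).
    assert (Ea : a = Q (vscale (RtoC (-1)) (Q z2))).
    { rewrite lin_scale, h3, E2, E1; auto. veq. }
    apply (e0n (vscale (RtoC (-1)) (vscale (RtoC (-1)) (Q z2)))).
    apply l2_vscale, l2_vscale, pQ; auto.
    assert (l2 (Q z2)) by (apply pQ; auto).
    rewrite <- Pa, Ea. rewrite h2. rewrite !lin_scale; auto; try veq.
    all: try (apply l2_vscale; auto). }
  assert (Case2 : forall b, l2 b -> Q b = e0 -> False).
  { intros b Hb Qb.
    assert (Qsurj : forall y, l2 y -> exists z, l2 z /\ Q z = y).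
    { intros y Hy. destruct (surj y Hy) as (x & c & Hx & ->).
      exists (vadd (vscale c b) (P x)). split.
      assert (l2 (P x)) by (apply pP; auto).
      apply l2_vadd; [apply l2_vscale|]; auto.
      rewrite lQ, h1, Qb; auto; try veq. }
    destruct (Qsurj b Hb) as (z1 & Hz1 & E1).
    destruct (Qsurj z1 Hz1) as (z2 & Hz2 & E2).
    assert (Eb : b = P (vscale (RtoC (-1)) (P z2))).
    { rewrite lin_scale, <- E1, <- E2, h3; auto. }
    apply (e0n (vscale (RtoC (-1)) (P z2))).
    apply l2_vscale, pP; auto.
    assert (l2 (P z2)) by (apply pP; auto).
    rewrite <- Qb, Eb. rewrite h1; auto. apply l2_vscale; auto. }
  destruct (surj (Q e0) (pQ _ He0)) as (x & c & Hx & E).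
  rewrite h1 in E; auto.
  assert (l2 (P x)) by (apply pP; auto).
  destruct (classic (c = RtoC 0)) as [Hc | Hc].
  - subst c. apply (Case1 x Hx). symmetry. apply Qinj; auto.
    rewrite E. veq.
  - apply (Case2 (vscale (Cinv c) (vsub e0 (P x)))).
    apply l2_vscale, l2_vsub; auto.
    rewrite lin_scale, lin_sub, E; auto. 2: apply l2_vsub; auto.
    apply functional_extensionality; intro n; unfold vadd, vsub, vscale. field. auto.
Qed.

Lemma fst_le (a b : C) : Rabs (fst a - fst b) <= Cmod (Cminus a b).
Proof.
  pose proof (Rmax_Cmod (Cminus a b)). destruct a as [a1 a2], b as [b1 b2].
  simpl in *. eapply Rle_trans; [|exact H]. replace (a1 + - b1) with (a1 - b1) by ring. apply Rmax_l.
Qed.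

Lemma snd_le (a b : C) : Rabs (snd a - snd b) <= Cmod (Cminus a b).
Proof.
  pose proof (Rmax_Cmod (Cminus a b)). destruct a as [a1 a2], b as [b1 b2].
  simpl in *. eapply Rle_trans; [|exact H]. replace (a2 + - b2) with (a2 - b2) by ring. apply Rmax_r.
Qed.

Lemma Cmod_le_sum (z : C) : Cmod z <= Rabs (fst z) + Rabs (snd z).
Proof.
  unfold Cmod. rewrite <- (sqrt_pow2 (Rabs (fst z) + Rabs (snd z))).
  2: pose proof (Rabs_pos (fst z)); pose proof (Rabs_pos (snd z)); lra.
  apply sqrt_le_1_alt. rewrite <- (pow2_abs (fst z)), <- (pow2_abs (snd z)).
  pose proof (Rabs_pos (fst z)); pose proof (Rabs_pos (snd z)). nra.
Qed.

Lemma lim_bound (u : nat -> R) l m r : Un_cv u l -> (forall m', (m <= m')%nat -> Rabs (u m' - u m) <= r) ->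
  Rabs (l - u m) <= r.
Proof.
  intros Hl H. apply le_epsilon. intros eps He.
  destruct (Hl eps He) as [N HN]. set (n := Nat.max N m).
  assert (h1 := HN n ltac:(unfold n; lia)). unfold Rdist in h1.
  assert (h2 := H n ltac:(unfold n; lia)).
  replace (l - u m) with ((u n - u m) - (u n - l)) by ring.
  eapply Rle_trans. apply Rabs_triang. rewrite Rabs_Ropp. lra.
Qed.

Lemma ps_unif z K N : 0 <= K -> (forall k, Cmod (z k) <= K) -> sqrt (ps z N) <= (INR N + 1) * K.
Proof.
  intros HK H. rewrite <- (sqrt_pow2 ((INR N + 1) * K)).
  2: pose proof (pos_INR N); nra.
  apply sqrt_le_1_alt. induction N.
  - unfold ps; simpl sum_f_R0; unfold sqf. pose proof (H O). pose proof (Cmod_ge_0 (z O)). simpl INR. nra.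
  - rewrite ps_S. unfold sqf. rewrite S_INR. pose proof (H (S N)). pose proof (Cmod_ge_0 (z (S N))).
    pose proof (pos_INR N). nra.
Qed.

Lemma Cmod_sub_self u : Cmod (Cminus u u) = 0.
Proof. replace (Cminus u u) with (RtoC 0) by ring. apply Cmod_0. Qed.

Lemma fixpt (F : (nat -> C) -> (nat -> C)) : pres F ->
  (forall u v, l2 u -> l2 v -> l2norm (vsub (F u) (F v)) <= / 2 * l2norm (vsub u v)) ->
  exists x, l2 x /\ F x = x.
Proof.
  intros pF HF.
  set (xs := fun m => Nat.iter m F vzero).
  assert (Hxs : forall m, l2 (xs m)).
  { induction m. apply l2_vzero. apply pF. apply IHm. }
  set (a := l2norm (vsub (xs 1%nat) (xs 0%nat))).
  assert (Ha : 0 <= a) by apply l2norm_ge0.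
  assert (Hstep : forall m, l2norm (vsub (xs (S m)) (xs m)) <= a * (/2)^m).
  { induction m. simpl pow. unfold a. lra.
    change (xs (S (S m))) with (F (xs (S m))). change (xs (S m)) with (F (xs m)) at 2.
    eapply Rle_trans. apply HF; auto. rewrite <- tech_pow_Rmult. change (F (xs m)) with (xs (S m)). nra. }
  assert (Hcau : forall m k, l2norm (vsub (xs (m + k)%nat) (xs m)) <= 2 * a * ((/2)^m - (/2)^(m+k))).
  { intros m k. induction k.
    - rewrite Nat.add_0_r. replace ((/2)^m - (/2)^m) with 0 by ring.
      destruct (l2_scal (xs m) (vsub (xs m) (xs m)) 0) as [_ Hb]; auto. lra.
      intros n. unfold vsub. rewrite Cmod_sub_self. lra. lra.
    - rewrite Nat.add_succ_r.
      destruct (l2_tri (vsub (xs (S (m + k)%nat)) (xs (m + k)%nat)) (vsub (xs (m + k)%nat) (xs m))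
                  (vsub (xs (S (m + k)%nat)) (xs m))) as [_ Hb].
      apply l2_vsub; auto. apply l2_vsub; auto.
      intros n. unfold vsub.
      match goal with |- Cmod (Cminus ?p ?r) <= Cmod (Cminus ?p ?q) + _ =>
        replace (Cminus p r) with (Cplus (Cminus p q) (Cminus q r)) by ring end.
      apply Cmod_triangle.
      eapply Rle_trans. apply Hb. pose proof (Hstep (m + k)%nat).
      rewrite <- tech_pow_Rmult. lra. }
  set (c := fun m => 2 * a * (/2)^m).
  assert (Hc : forall m m', (m <= m')%nat -> l2norm (vsub (xs m') (xs m)) <= c m).
  { intros m m' Hm. replace m' with (m + (m' - m))%nat by lia.
    eapply Rle_trans. apply Hcau. unfold c. pose proof (pow_le (/2) (m + (m' - m))).
    assert (0 <= /2) by lra. specialize (H H0). nra. }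
  assert (Hcoord : forall m m' k, (m <= m')%nat -> Cmod (Cminus (xs m' k) (xs m k)) <= c m).
  { intros. eapply Rle_trans; [|apply (Hc m m' H)]. apply (coord_le (vsub (xs m') (xs m))).
    apply l2_vsub; auto. }
  assert (Hlim0 : forall eps, 0 < eps -> exists N, forall n, (N <= n)%nat -> c n < eps).
  { intros eps He. destruct (pow_lt_1_zero (/2) ltac:(rewrite Rabs_pos_eq; lra) (eps / (2 * a + 1)))
      as [N HN]. apply Rdiv_lt_0_compat; lra.
    exists N. intros n Hn. specialize (HN n Hn). rewrite Rabs_pos_eq in HN by (apply pow_le; lra).
    unfold c. assert (0 <= (/2)^n) by (apply pow_le; lra).
    apply Rmult_lt_compat_l with (r := 2 * a + 1) in HN; [|lra].
    replace ((2 * a + 1) * (eps / (2 * a + 1))) with eps in HN by (field; lra). nra. }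
  assert (Hc0 : forall m, 0 <= c m). { intros; unfold c. pose proof (pow_le (/2) m). assert (0 <= /2) by lra. specialize (H H0). nra. }
  assert (HcS : forall m, c (S m) = / 2 * c m). { intros; unfold c. rewrite <- tech_pow_Rmult. ring. }
  assert (Hre : forall k, Cauchy_crit (fun m => fst (xs m k))).
  { intros k eps He. destruct (Hlim0 (eps / 2) ltac:(lra)) as [N HN]. exists N.
    intros n m Hn Hm. unfold Rdist.
    pose proof (fst_le (xs n k) (xs N k)). pose proof (fst_le (xs m k) (xs N k)).
    pose proof (Hcoord N n k Hn). pose proof (Hcoord N m k Hm). pose proof (HN N (le_n N)).
    replace (fst (xs n k) - fst (xs m k)) with ((fst (xs n k) - fst (xs N k)) - (fst (xs m k) - fst (xs N k))) by ring.
    eapply Rle_lt_trans. apply Rabs_triang. rewrite Rabs_Ropp. lra. }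
  assert (Him : forall k, Cauchy_crit (fun m => snd (xs m k))).
  { intros k eps He. destruct (Hlim0 (eps / 2) ltac:(lra)) as [N HN]. exists N.
    intros n m Hn Hm. unfold Rdist.
    pose proof (snd_le (xs n k) (xs N k)). pose proof (snd_le (xs m k) (xs N k)).
    pose proof (Hcoord N n k Hn). pose proof (Hcoord N m k Hm). pose proof (HN N (le_n N)).
    replace (snd (xs n k) - snd (xs m k)) with ((snd (xs n k) - snd (xs N k)) - (snd (xs m k) - snd (xs N k))) by ring.
    eapply Rle_lt_trans. apply Rabs_triang. rewrite Rabs_Ropp. lra. }
  set (x := fun k => (proj1_sig (Rcomplete.R_complete _ (Hre k)), proj1_sig (Rcomplete.R_complete _ (Him k))) : C).
  assert (Hxc : forall m k, Cmod (Cminus (x k) (xs m k)) <= 2 * c m).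
  { intros m k. eapply Rle_trans. apply Cmod_le_sum.
    assert (E1 : Rabs (fst (Cminus (x k) (xs m k))) <= c m).
    { change (fst (Cminus (x k) (xs m k))) with (fst (x k) - fst (xs m k)).
      unfold x; simpl fst. destruct (Rcomplete.R_complete _ (Hre k)) as [l Hl]. simpl.
      apply (lim_bound (fun m => fst (xs m k))); auto. intros m' Hm'.
      eapply Rle_trans. apply fst_le. apply Hcoord; auto. }
    assert (E2 : Rabs (snd (Cminus (x k) (xs m k))) <= c m).
    { change (snd (Cminus (x k) (xs m k))) with (snd (x k) - snd (xs m k)).
      unfold x; simpl snd. destruct (Rcomplete.R_complete _ (Him k)) as [l Hl]. simpl.
      apply (lim_bound (fun m => snd (xs m k))); auto. intros m' Hm'.
      eapply Rle_trans. apply snd_le. apply Hcoord; auto. }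
    lra. }
  clearbody x.
  assert (Htail : forall m, l2 (vsub x (xs m)) /\ l2norm (vsub x (xs m)) <= c m).
  { intros m. apply sqrt_ps_bound_l2. intros N. apply le_epsilon. intros eps He.
    destruct (Hlim0 (eps / (2 * (INR N + 1)))) as [m0 Hm0].
    { pose proof (pos_INR N). apply Rdiv_lt_0_compat; lra. }
    set (m' := Nat.max m m0).
    eapply Rle_trans. apply (mink (vsub x (xs m')) (vsub (xs m') (xs m))).
    { intros n. unfold vsub.
      match goal with |- Cmod (Cminus ?p ?r) <= Cmod (Cminus ?p ?q) + _ =>
        replace (Cminus p r) with (Cplus (Cminus p q) (Cminus q r)) by ring end.
      apply Cmod_triangle. }
    pose proof (ps_unif (vsub x (xs m')) (2 * c m') N ltac:(specialize (Hc0 m'); lra) (fun k => Hxc m' k)).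
    pose proof (l2_sqrt_ps (vsub (xs m') (xs m)) N ltac:(apply l2_vsub; auto)).
    pose proof (Hc m m' ltac:(unfold m'; lia)).
    pose proof (Hm0 m' ltac:(unfold m'; lia)).
    pose proof (pos_INR N).
    assert ((INR N + 1) * (2 * c m') <= eps).
    { apply Rmult_lt_compat_l with (r := 2 * (INR N + 1)) in H2; [|lra].
      replace (2 * (INR N + 1) * (eps / (2 * (INR N + 1)))) with eps in H2 by (field; lra). nra. }
    lra. }
  assert (Hx : l2 x).
  { destruct (l2_tri (vsub x (xs O)) (xs O) x) as [H _]; auto. apply Htail.
    intros n. unfold vsub.
    replace (x n) with (Cplus (Cminus (x n) (xs O n)) (xs O n)) at 1 by ring. apply Cmod_triangle. }
  exists x. split; auto.
  assert (Hfin : forall m, l2norm (vsub (F x) x) <= c m).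
  { intros m. destruct (l2_tri (vsub (F x) (F (xs m))) (vsub x (xs (S m))) (vsub (F x) x)) as [_ Hb].
    apply l2_vsub; auto. apply Htail.
    intros n. unfold vsub. change (F (xs m)) with (xs (S m)).
    match goal with |- Cmod (Cminus ?p ?r) <= Cmod (Cminus ?p ?q) + _ =>
      replace (Cminus p r) with (Cminus (Cminus p q) (Cminus r q)) by ring end.
    apply Cmod_sub_le.
    eapply Rle_trans. apply Hb. pose proof (HF x (xs m) Hx (Hxs m)).
    pose proof (proj2 (Htail m)). pose proof (proj2 (Htail (S m))). rewrite HcS in H1. lra. }
  apply vsub_zero. apply norm0_zero. apply l2_vsub; auto.
  apply le_epsilon. intros eps He. destruct (Hlim0 eps He) as [N HN].
  pose proof (Hfin N). pose proof (HN N (le_n N)). lra.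
Qed.

Definition Lop (w : nat -> C) (y : nat -> C) : nat -> C := fun n => Cdiv (y (S n)) (w n).

Section WS.
Variable w : nat -> C.
Variable B d : R.
Hypothesis HB : forall n, Cmod (w n) <= B.
Hypothesis Hd : 0 < d.
Hypothesis Hdw : forall n, d <= Cmod (w n).

Lemma w_nz n : w n <> RtoC 0.
Proof. apply Cmod_gt_0. specialize (Hdw n). lra. Qed.

Lemma sqf_W0 x : sqf (wshift w x) O = 0.
Proof. unfold sqf, wshift. rewrite Cmod_0. ring. Qed.

Lemma sqf_WS x n : sqf (wshift w x) (S n) = Cmod (w n) ^ 2 * sqf x n.
Proof. unfold sqf, wshift. rewrite Cmod_mult. ring. Qed.

Lemma ps_le_S x N : ps x N <= ps x (S N).
Proof. rewrite ps_S. pose proof (sqf_ge0 x (S N)). lra. Qed.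

Lemma sqf_le_ps x N : sqf x N <= ps x N.
Proof. destruct N. unfold ps; simpl sum_f_R0; lra. rewrite ps_S. pose proof (ps_ge0 x N). lra. Qed.

Lemma W_l2 x : l2 x -> l2 (wshift w x).
Proof.
  intros Hx. assert (HB0 : 0 <= B) by (eapply Rle_trans; [apply Cmod_ge_0|apply (HB O)]).
  assert (C1 : forall N, ps (wshift w x) (S N) <= B ^ 2 * ps x N).
  { induction N.
    - unfold ps; simpl sum_f_R0. rewrite sqf_W0, sqf_WS.
      assert (Cmod (w O) ^ 2 <= B ^ 2) by (apply pow_incr; split; [apply Cmod_ge_0|apply HB]).
      pose proof (sqf_ge0 x O). nra.
    - rewrite (ps_S _ (S N)), sqf_WS, (ps_S x N).
      assert (Cmod (w (S N)) ^ 2 <= B ^ 2) by (apply pow_incr; split; [apply Cmod_ge_0|apply HB]).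
      pose proof (sqf_ge0 x (S N)). nra. }
  apply (ps_bound_l2 _ (B * l2norm x)). pose proof (l2norm_ge0 x); nra.
  intros N. eapply Rle_trans. apply ps_le_S. eapply Rle_trans. apply C1.
  pose proof (l2_ps x N Hx). pose proof (pow2_ge_0 B).
  replace ((B * l2norm x) ^ 2) with (B ^ 2 * l2norm x ^ 2) by ring. nra.
Qed.

Lemma W_below x : l2 x -> d * l2norm x <= l2norm (wshift w x).
Proof.
  intros Hx. pose proof (W_l2 x Hx) as HW.
  assert (C1 : forall N, d ^ 2 * ps x N <= ps (wshift w x) (S N)).
  { induction N.
    - unfold ps; simpl sum_f_R0. rewrite sqf_W0, sqf_WS.
      assert (d ^ 2 <= Cmod (w O) ^ 2) by (apply pow_incr; split; [lra|apply Hdw]).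
      pose proof (sqf_ge0 x O). nra.
    - rewrite (ps_S _ (S N)), sqf_WS, (ps_S x N).
      assert (d ^ 2 <= Cmod (w (S N)) ^ 2) by (apply pow_incr; split; [lra|apply Hdw]).
      pose proof (sqf_ge0 x (S N)). nra. }
  assert (l2norm x <= l2norm (wshift w x) / d).
  { apply ps_bound_l2. pose proof (l2norm_ge0 (wshift w x)). apply Rdiv_le_0_compat; lra.
    intros N. pose proof (C1 N). pose proof (l2_ps _ (S N) HW).
    assert (d ^ 2 * ps x N <= d ^ 2 * (l2norm (wshift w x) / d) ^ 2).
    { replace (d ^ 2 * (l2norm (wshift w x) / d) ^ 2) with (l2norm (wshift w x) ^ 2) by (field; lra). lra. }
    apply Rmult_le_reg_l with (d ^ 2). apply pow_lt; lra. auto. }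
  apply Rmult_le_compat_l with (r := d) in H; [|lra].
  replace (d * (l2norm (wshift w x) / d)) with (l2norm (wshift w x)) in H by (field; lra). lra.
Qed.

Lemma sqf_L y n : sqf (Lop w y) n = sqf y (S n) / Cmod (w n) ^ 2.
Proof. unfold sqf, Lop. rewrite Cmod_div by apply w_nz. field. apply Rgt_not_eq. apply Cmod_gt_0, w_nz. Qed.

Lemma aux_div s cc : 0 <= s -> d <= cc -> d ^ 2 * (s / cc ^ 2) <= s.
Proof.
  intros Hs Hc. assert (0 < cc) by lra.
  assert (H2 : 0 < cc ^ 2) by (apply pow_lt; lra).
  assert (H3 : d ^ 2 <= cc ^ 2) by (apply pow_incr; lra).
  apply (Rmult_le_reg_r (cc ^ 2)); auto.
  replace (d ^ 2 * (s / cc ^ 2) * cc ^ 2) with (d ^ 2 * s) by (field; lra). nra.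
Qed.

Lemma L_bound y : l2 y -> l2 (Lop w y) /\ l2norm (Lop w y) <= / d * l2norm y.
Proof.
  intros Hy.
  assert (C1 : forall N, d ^ 2 * ps (Lop w y) N <= ps y (S N) - sqf y O).
  { induction N.
    - unfold ps; simpl sum_f_R0. rewrite sqf_L. pose proof (aux_div (sqf y 1) (Cmod (w O)) (sqf_ge0 _ _) (Hdw O)). lra.
    - rewrite (ps_S _ N), (ps_S y (S N)), sqf_L.
      pose proof (aux_div (sqf y (S (S N))) (Cmod (w (S N))) (sqf_ge0 _ _) (Hdw (S N))). nra. }
  apply ps_bound_l2. pose proof (l2norm_ge0 y). assert (0 < / d) by (apply Rinv_0_lt_compat; lra). nra.
  intros N. pose proof (C1 N). pose proof (l2_ps y (S N) Hy). pose proof (sqf_ge0 y O).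
  apply Rmult_le_reg_l with (d ^ 2). apply pow_lt; lra.
  replace (d ^ 2 * (/ d * l2norm y) ^ 2) with (l2norm y ^ 2) by (field; lra). lra.
Qed.

End WS.

Theorem proposition4p20 (w : nat -> C)
  (Hbdd : exists B : R, forall n, Cmod (w n) <= B)
  (Hinf : exists d : R, 0 < d /\ forall n, d <= Cmod (w n)) :
  ~ in_closure_c_nil2 (wshift w).
Proof.
  intros Hcl. destruct Hbdd as [B HB]. destruct Hinf as [d [Hd Hdw]].
  destruct (Hcl (d / 2) ltac:(lra)) as (M & N & bM & bN & sM & sN & Hclose).
  destruct bM as (pM & lM & _). destruct bN as (pN & lN & _).
  change (pres M) in pM. change (pres N) in pN. change (lin M) in lM. change (lin N) in lN.
  set (T := commutator M N) in *.
  set (P := fun x => vadd (M x) (N x)).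
  set (Q := fun x => vsub (M x) (N x)).
  assert (pT : pres T).
  { intros x Hx. unfold T, commutator. apply l2_vsub; [apply pM, pN|apply pN, pM]; auto. }
  assert (pP : pres P). { intros x Hx. unfold P. apply l2_vadd; [apply pM|apply pN]; auto. }
  assert (pQ : pres Q). { intros x Hx. unfold Q. apply l2_vsub; [apply pM|apply pN]; auto. }
  assert (lT : lin T).
  { intros a x y Hx Hy. unfold T, commutator.
    rewrite (lN a x y), (lM a x y); auto. rewrite lM, lN; try apply pM; try apply pN; auto. veq. }
  assert (lP : lin P).
  { intros a x y Hx Hy. unfold P. rewrite (lN a x y), (lM a x y); auto. veq. }
  assert (lQ : lin Q).
  { intros a x y Hx Hy. unfold Q. rewrite (lN a x y), (lM a x y); auto. veq. }
  assert (h1 : forall x, l2 x -> T x = Q (P x)).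
  { intros x Hx. unfold T, Q, P, commutator.
    assert (l2 (M x)) by (apply pM; auto). assert (l2 (N x)) by (apply pN; auto).
    rewrite (lin_add M), (lin_add N), sM, sN; auto. veq. }
  assert (h2 : forall x, l2 x -> P (Q x) = vscale (RtoC (-1)) (T x)).
  { intros x Hx. unfold T, Q, P, commutator.
    assert (l2 (M x)) by (apply pM; auto). assert (l2 (N x)) by (apply pN; auto).
    rewrite (lin_sub M), (lin_sub N), sM, sN; auto. veq. }
  assert (h3 : forall x, l2 x -> Q (Q x) = vscale (RtoC (-1)) (P (P x))).
  { intros x Hx. unfold Q, P.
    assert (l2 (M x)) by (apply pM; auto). assert (l2 (N x)) by (apply pN; auto).
    rewrite (lin_sub M), (lin_sub N), (lin_add M), (lin_add N), sM, sN; auto. veq. }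
  assert (inj : forall x, l2 x -> T x = vzero -> x = vzero).
  { intros x Hx E. apply norm0_zero; auto.
    pose proof (Hclose x Hx) as H. try fold T in H. rewrite E in H.
    replace (vsub (wshift w x) vzero) with (wshift w x) in H by veq.
    pose proof (W_below w B d HB Hd Hdw x Hx). pose proof (l2norm_ge0 x). nra. }
  assert (e0n : forall x, l2 x -> T x <> e0).
  { intros x Hx E.
    pose proof (Hclose x Hx) as H. try fold T in H. rewrite E in H.
    set (z := vsub (wshift w x) e0) in *.
    assert (Hz : l2 z) by (apply l2_vsub; [apply (W_l2 w B HB x Hx)|apply l2_e0]).
    assert (sz0 : sqf z O = 1).
    { unfold sqf, z, vsub, wshift, e0. replace (Cminus (RtoC 0) (RtoC 1)) with (Copp (RtoC 1)) by ring.
      rewrite Cmod_opp, Cmod_1. ring. }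
    assert (szS : forall n, sqf z (S n) = Cmod (w n) ^ 2 * sqf x n).
    { intros n. unfold sqf, z, vsub, wshift, e0. replace (Cminus (Cmult (w n) (x n)) (RtoC 0)) with (Cmult (w n) (x n)) by ring.
      rewrite Cmod_mult. ring. }
    assert (C1 : forall K, 1 + d ^ 2 * ps x K <= ps z (S K)).
    { induction K.
      - unfold ps; simpl sum_f_R0. rewrite sz0, szS.
        assert (d ^ 2 <= Cmod (w O) ^ 2) by (apply pow_incr; split; [lra|apply Hdw]).
        pose proof (sqf_ge0 x O). nra.
      - rewrite (ps_S _ (S K)), szS, (ps_S x K).
        assert (d ^ 2 <= Cmod (w (S K)) ^ 2) by (apply pow_incr; split; [lra|apply Hdw]).
        pose proof (sqf_ge0 x (S K)). nra. }
    assert (Hb : forall K, ps x K <= ((d / 2 * l2norm x) ^ 2 - 1) / d ^ 2).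
    { intros K. pose proof (C1 K). pose proof (l2_ps z (S K) Hz).
      assert (l2norm z ^ 2 <= (d / 2 * l2norm x) ^ 2).
      { pose proof (l2norm_ge0 z). apply pow_incr. lra. }
      apply (Rmult_le_reg_l (d ^ 2)). apply pow_lt; lra.
      replace (d ^ 2 * (((d / 2 * l2norm x) ^ 2 - 1) / d ^ 2)) with ((d / 2 * l2norm x) ^ 2 - 1) by (field; lra).
      lra. }
    destruct (ps_bound_series x _ Hb) as [_ Hs]. rewrite <- l2norm_sq in Hs by auto.
    assert (d ^ 2 * l2norm x ^ 2 <= (d / 2 * l2norm x) ^ 2 - 1).
    { apply (Rmult_le_compat_l (d ^ 2)) in Hs. 2: apply pow2_ge_0.
      replace (d ^ 2 * (((d / 2 * l2norm x) ^ 2 - 1) / d ^ 2)) with ((d / 2 * l2norm x) ^ 2 - 1) in Hs by (field; lra).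
      lra. }
    assert (0 <= d ^ 2 * l2norm x ^ 2) by (pose proof (pow2_ge_0 d); pose proof (pow2_ge_0 (l2norm x)); nra).
    replace ((d / 2 * l2norm x) ^ 2) with (/ 4 * (d ^ 2 * l2norm x ^ 2)) in H0 by (field; lra).
    lra. }
  assert (surj : forall y, l2 y -> exists x c, l2 x /\ y = vadd (T x) (vscale c e0)).
  { intros y Hy.
    set (F := fun v => vadd (Lop w y) (Lop w (vsub (wshift w v) (T v)))).
    assert (pF : pres F).
    { intros v Hv. unfold F. apply l2_vadd. apply (L_bound w d Hd Hdw y Hy).
      apply (L_bound w d Hd Hdw). apply l2_vsub. apply (W_l2 w B HB v Hv). apply pT; auto. }
    assert (HF : forall u v, l2 u -> l2 v -> l2norm (vsub (F u) (F v)) <= / 2 * l2norm (vsub u v)).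
    { intros u v Hu Hv. assert (Huv : l2 (vsub u v)) by (apply l2_vsub; auto).
      replace (vsub (F u) (F v)) with (Lop w (vsub (wshift w (vsub u v)) (T (vsub u v)))).
      2: { rewrite (lin_sub T); auto. apply functional_extensionality; intro n.
           unfold F, Lop, vsub, vadd, wshift. cbv beta iota. field. apply (w_nz w d Hd Hdw). }
      assert (Hl := Hclose _ Huv). try fold T in Hl.
      destruct (L_bound w d Hd Hdw (vsub (wshift w (vsub u v)) (T (vsub u v)))) as [_ Hl2].
      apply l2_vsub. apply (W_l2 w B HB _ Huv). apply pT; auto.
      eapply Rle_trans. apply Hl2.
      assert (0 < / d) by (apply Rinv_0_lt_compat; lra).
      apply Rmult_le_compat_l with (r := / d) in Hl; [|lra].
      replace (/ d * (d / 2 * l2norm (vsub u v))) with (/ 2 * l2norm (vsub u v)) in Hl by (field; lra).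
      lra. }
    destruct (fixpt F pF HF) as [x [Hx Fx]].
    exists x, (Cminus (y O) (T x O)). split; auto.
    assert (HS : forall n, T x (S n) = y (S n)).
    { intros n. apply (f_equal (fun f => f n)) in Fx. unfold F, Lop, vadd, vsub, wshift in Fx.
      pose proof (w_nz w d Hd Hdw n) as Hw.
      assert (E : Cmult (w n) (x n) = Cplus (Cminus (y (S n)) (T x (S n))) (Cmult (w n) (x n))).
      { rewrite <- Fx at 1. field. auto. }
      transitivity (Cminus (y (S n)) (Cminus (Cplus (Cminus (y (S n)) (T x (S n))) (Cmult (w n) (x n))) (Cmult (w n) (x n)))).
      ring. rewrite <- E. ring. }
    apply functional_extensionality; intro n. unfold vadd, vscale, e0.
    destruct n. ring. rewrite HS. ring. }
  exact (algebra P Q T pP pQ pT lP lQ lT h1 h2 h3 inj e0n surj).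
Qed.
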